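(* Let $\mathcal{D}$ be any basic action theory whose initial theory $\mathcal{D}_0$ includes the axiom $$(\star)\quad [\forall \vec x\, \exists \iota \textstyle\bigwedge_i f_i(\iota) = x_i] \land [\forall \iota,\iota'.\ \textstyle\bigwedge_i f_i(\iota) = f_i(\iota') \supset \iota = \iota'],$$ and let $\phi$ be any situation-suppressed $\mathcal{L}$-formula. Then $$\frac{1}{\gamma}\sum_{\{s':\phi[s']\}} p(s',S_0) \quad\text{and}\quad \frac{1}{\gamma'}\sum_{\vec x} \langle \iota.\ \textstyle\bigwedge_i f_i(\iota) = x_i \land \phi[\iota] \to p(\iota,S_0)\rangle$$ define the same number (in every $\mathbb{R}$-interpretation satisfying $\mathcal{D}$), where $\gamma,\gamma'$ are the respective numerators with $\phi$ replaced by $\mathit{true}$.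
   Context: Situation calculus: a many-sorted language $\mathcal{L}$ with sorts action, situation, object; $do(a,s)$ is the successor of $s$ under action $a$; $S_0$ is the actual initial situation; $\mathit{Init}(s) \doteq \neg\exists a,s'.\, s = do(a,s')$, and $\iota,\iota'$ range over initial situations. $f_1,\ldots,f_n$ are all the fluents, each taking only a situation argument and taking values in a finite set; $\vec x$ ranges over value vectors, $i$ over $1..n$. $\phi[s]$ restores situation argument $s$ in $\phi$. For a variable $z$, formula $\psi$ and term $t$, $\langle z.\ \psi \to t\rangle = u$ abbreviates $[(\exists z\psi)\supset \forall z(\psi \supset u = t)] \land [(\neg\exists z\psi) \supset u = 0]$. Distinguished symbols: $\mathit{Poss}(a,s)$, $p(s',s)$ (weight of $s'$ when in $s$), $l(a,s)$ (likelihood). A basic action theory consists of $\mathcal{D}_0$ containing (P1) $\forall \iota,s.\ p(s,\iota) \ge 0 \land (p(s,\iota) > 0 \supset \mathit{Init}(s))$; precondition axioms; successor state axioms including (P2) $p(s',do(a,s)) = u \equiv \exists s''[s' = do(a,s'') \land \mathit{Poss}(a,s'') \land u = p(s'',s)\times l(a,s'')] \lor \neg\exists s''[s'=do(a,s'')\land \mathit{Poss}(a,s'')] \land u = 0$; likelihood axioms $l(A(\vec x),s)=u\equiv\psi_A(\vec x,u,s)$; foundational axioms. Entailment is over $\mathbb{R}$-interpretations (arithmetic, $e,\pi$, exp, log with usual meaning over the reals). Finite sums are abbreviations for second-order formulas. *)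

(* Defs.v *)
From HB Require Import structures.
From mathcomp Require Import all_boot all_order all_algebra.
From mathcomp Require Import reals.
From Stdlib Require List.
Set Implicit Arguments. Unset Strict Implicit. Unset Printing Implicit Defensive.
Import Order.TTheory GRing.Theory Num.Theory.
Local Open Scope ring_scope.

(* Semantic rendering of an R-interpretation of the situation calculus:
   Act = domain of sort action, Sit = domain of sort situation,
   do_ = interpretation of do, S0 = interpretation of S_0. *)

Definition Init (Act Sit : Type) (do_ : Act -> Sit -> Sit) (s : Sit) : Prop :=
  ~ exists a s', s = do_ a s'.

Definition foundational (Act Sit : Type) (do_ : Act -> Sit -> Sit) (S0 : Sit)
  : Prop :=
  (forall a1 a2 s1 s2, do_ a1 s1 = do_ a2 s2 -> a1 = a2 /\ s1 = s2) /\
  (forall P : Sit -> Prop,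
      (forall s, Init do_ s -> P s) ->
      (forall a s, P s -> P (do_ a s)) -> forall s, P s) /\
  Init do_ S0.

Definition axP1 (R : realType) (Act Sit : Type) (do_ : Act -> Sit -> Sit)
  (p : Sit -> Sit -> R) : Prop :=
  forall iota s, Init do_ iota -> 0 <= p s iota /\ (0 < p s iota -> Init do_ s).

Definition axP2 (R : realType) (Act Sit : Type) (do_ : Act -> Sit -> Sit)
  (Poss : Act -> Sit -> Prop) (l : Act -> Sit -> R) (p : Sit -> Sit -> R)
  : Prop :=
  forall s' a s u,
    p s' (do_ a s) = u <->
    ((exists s'', s' = do_ a s'' /\ Poss a s'' /\ u = p s'' s * l a s'') \/
     ((~ exists s'', s' = do_ a s'' /\ Poss a s'') /\ u = 0)).

Definition axStar (n : nat) (V : 'I_n -> finType) (Act Sit : Type)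
  (do_ : Act -> Sit -> Sit) (f : forall i : 'I_n, Sit -> V i) : Prop :=
  (forall x : {dffun forall i : 'I_n, V i},
      exists iota, Init do_ iota /\ forall i, f i iota = x i) /\
  (forall iota iota', Init do_ iota -> Init do_ iota' ->
      (forall i, f i iota = f i iota') -> iota = iota').

(* Finite sum  Sum_{s : Q s} w(s) = v : the sum of w over the (finitely many)
   s satisfying Q with nonzero weight. *)
Definition sum_over (R : realType) (Sit : Type) (Q : Sit -> Prop)
  (w : Sit -> R) (v : R) : Prop :=
  exists ls : seq Sit, List.NoDup ls /\
    (forall s, List.In s ls <-> Q s /\ w s <> 0) /\
    v = \sum_(s <- ls) w s.

Definition cond_term (R : realType) (Sit : Type) (psi : Sit -> Prop)
  (t : Sit -> R) (u : R) : Prop :=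
  ((exists z, psi z) -> forall z, psi z -> u = t z) /\
  ((~ exists z, psi z) -> u = 0).

(* Main.v *)
Require Import Defs.
From HB Require Import structures.
From mathcomp Require Import all_boot all_order all_algebra.
From mathcomp Require Import reals.
From Stdlib Require Import ClassicalEpsilon.
Import Order.TTheory GRing.Theory Num.Theory.
Local Open Scope ring_scope.

Definition decb (P : Prop) : bool :=
  if excluded_middle_informative P then true else false.

Lemma decbP (P : Prop) : decb P = true <-> P.
Proof. rewrite /decb; case: excluded_middle_informative => //. Qed.

Lemma In_mem (T : eqType) (x : T) (s : seq T) : List.In x s <-> x \in s.
Proof.
elim: s => [|a s IH] //=; rewrite in_cons; split.
- by case=> [->|/IH ->]; rewrite ?eqxx ?orbT.
- by case/orP=> [/eqP ->|/IH]; [left|right].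
Qed.

Lemma big_In_ext (R : realType) (S : Type) (ls : seq S) (F1 F2 : S -> R) :
  (forall s, List.In s ls -> F1 s = F2 s) ->
  \sum_(s <- ls) F1 s = \sum_(s <- ls) F2 s.
Proof.
elim: ls => [|a l IH] H; first by rewrite !big_nil.
rewrite !big_cons H /=; last by left.
by rewrite IH // => s Hs; apply: H; right.
Qed.

Lemma mem_map_In (T : eqType) (S : Type) (h : S -> T) (l : seq S) x :
  x \in map h l -> exists s, List.In s l /\ h s = x.
Proof.
elim: l => [|a l IH] //=; rewrite in_cons => /orP [/eqP ->|/IH [s [Hs <-]]].
- by exists a; split=> //; left.
- by exists s; split=> //; right.
Qed.

Lemma In_mem_map (T : eqType) (S : Type) (h : S -> T) (l : seq S) s :
  List.In s l -> h s \in map h l.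
Proof.
elim: l => [|a l IH] //= [->|Hs]; rewrite in_cons ?eqxx //.
by rewrite IH ?orbT.
Qed.

Section Aux.
Variables (R : realType) (T : finType) (Sit : Type) (g : T -> Sit)
  (h : Sit -> T) (I : Sit -> Prop).
Hypothesis hg : forall x, h (g x) = x.
Hypothesis gh : forall s, I s -> g (h s) = s.

Lemma uniq_map_h (ls : seq Sit) :
  List.NoDup ls -> (forall s, List.In s ls -> I s) -> uniq (map h ls).
Proof.
elim=> [|a l Hna Hnd IH] // HI /=.
apply/andP; split; last by apply: IH => s Hs; apply: HI; right.
apply/negP => /mem_map_In [s [Hs Ehs]].
apply: Hna.
have : g (h s) = g (h a) by rewrite Ehs.
by rewrite !gh => [<- //| |]; apply: HI; [left|right].
Qed.

Lemma NoDup_map_g (l : seq T) : uniq l -> List.NoDup (map g l).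
Proof.
elim: l => [|a l IH] /=; first by constructor.
case/andP=> Ha Hu; constructor; last exact: IH.
move=> /List.in_map_iff [y [Ey Hy]].
have Eya : y = a by rewrite -(hg y) Ey hg.
by move/negP: Ha; apply; rewrite -Eya; apply/In_mem.
Qed.

Variables (Q : Sit -> Prop) (w : Sit -> R) (F : T -> R).
Hypothesis wI : forall s, w s <> 0 -> I s.
Hypothesis FQ : forall x, Q (g x) -> F x = w (g x).
Hypothesis FnQ : forall x, ~ Q (g x) -> F x = 0.

Lemma sum_char v : sum_over Q w v -> v = \sum_x F x.
Proof.
case=> ls [Hnd [Hin ->]].
have HI : forall s, List.In s ls -> I s.
  by move=> s /Hin [_ /wI].
rewrite (@big_In_ext _ _ ls w (fun s => w (g (h s)))); last first.
  by move=> s /HI /gh ->.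
rewrite -(big_map h xpredT (fun x => w (g x))).
rewrite big_uniq /=; last exact: uniq_map_h.
rewrite big_mkcond /=; apply: eq_bigr => x _.
case: ifP => [/mem_map_In [s [Hs Ex]]|Hx].
  have Egx : g x = s by rewrite -Ex gh //; apply: HI.
  by rewrite FQ // Egx; case: (Hin s) => /(_ Hs) [].
case: (classic (Q (g x))) => HQ; last by rewrite FnQ.
rewrite FQ //; case: (classic (w (g x) = 0)) => // Hw.
have : List.In (g x) ls by apply/Hin.
by move/(@In_mem_map _ _ h); rewrite hg Hx.
Qed.

Lemma sum_exists : exists v, sum_over Q w v.
Proof.
set filt := filter (fun x => decb (Q (g x) /\ w (g x) <> 0)) (enum T).
exists (\sum_(s <- map g filt) w s); exists (map g filt); split.
  by apply: NoDup_map_g; rewrite filter_uniq // enum_uniq.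
split=> //; move=> s; split.
  move=> /List.in_map_iff [x [<- /In_mem]].
  by rewrite mem_filter => /andP [/decbP].
case=> HQ Hw; rewrite -(gh _ (wI _ Hw)); apply: List.in_map; apply/In_mem.
by rewrite mem_filter mem_enum andbT; apply/decbP; rewrite gh //; apply: wI.
Qed.

End Aux.

Theorem mainTheorem10 (R : realType) (n : nat) (V : 'I_n -> finType)
  (Act Sit : Type) (do_ : Act -> Sit -> Sit) (S0 : Sit)
  (f : forall i : 'I_n, Sit -> V i)
  (Poss : Act -> Sit -> Prop) (l : Act -> Sit -> R) (p : Sit -> Sit -> R)
  (phi : Sit -> Prop) :
  foundational do_ S0 -> axP1 do_ p -> axP2 do_ Poss l p -> axStar do_ f ->
  let psi (x : {dffun forall i : 'I_n, V i}) (Q : Sit -> Prop) (iota : Sit) :=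
    Init do_ iota /\ (forall i, f i iota = x i) /\ Q iota in
  (exists (v g : R) (u u' : {dffun forall i : 'I_n, V i} -> R),
      sum_over phi (fun s => p s S0) v /\
      sum_over (fun _ => True) (fun s => p s S0) g /\
      (forall x, cond_term (psi x phi) (fun iota => p iota S0) (u x)) /\
      (forall x, cond_term (psi x (fun _ => True)) (fun iota => p iota S0) (u' x)))
  /\
  (forall (v g : R) (u u' : {dffun forall i : 'I_n, V i} -> R),
      sum_over phi (fun s => p s S0) v ->
      sum_over (fun _ => True) (fun s => p s S0) g ->
      (forall x, cond_term (psi x phi) (fun iota => p iota S0) (u x)) ->
      (forall x, cond_term (psi x (fun _ => True)) (fun iota => p iota S0) (u' x)) ->
      v / g = (\sum_x u x) / (\sum_x u' x)).
Proof.
move=> [_ [_ HS0]] HP1 _ [Hs1 Hs2] psi.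
have Hnz : forall s, p s S0 <> 0 -> Init do_ s.
  move=> s Hs; case: (HP1 S0 s HS0) => H0 H1; apply: H1.
  by rewrite lt_neqAle H0 andbT eq_sym; apply/eqP.
pose gi := fun x => proj1_sig (constructive_indefinite_description _ (Hs1 x)).
have Hg : forall x, Init do_ (gi x) /\ forall i, f i (gi x) = x i.
  by move=> x; rewrite /gi; case: constructive_indefinite_description.
pose h := fun s => ([ffun i => f i s] : {dffun forall i : 'I_n, V i}).
have hg : forall x, h (gi x) = x.
  by move=> x; apply/ffunP => i; rewrite ffunE (proj2 (Hg x)).
have gh : forall s, Init do_ s -> gi (h s) = s.
  move=> s Hs; apply: Hs2 => //; first exact: (proj1 (Hg _)).
  by move=> i; rewrite (proj2 (Hg _)) ffunE.
have uniqz : forall (x : {dffun forall i : 'I_n, V i}) z, Init do_ z -> (forall i, f i z = x i) -> z = gi x.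
  move=> x z Hz Hf; apply: Hs2 => //; first exact: (proj1 (Hg _)).
  by move=> i; rewrite Hf (proj2 (Hg _)).
have condP : forall (Q : Sit -> Prop) (u : {dffun forall i : 'I_n, V i} -> R) x,
    cond_term (psi x Q) (fun iota => p iota S0) (u x) ->
    (Q (gi x) -> u x = p (gi x) S0) /\ (~ Q (gi x) -> u x = 0).
  move=> Q u x [C1 C2]; split.
    move=> HQ; have Hp : psi x Q (gi x) by split; [exact: (proj1 (Hg x))|split; [exact: (proj2 (Hg x))|]].
    by apply: C1 => //; exists (gi x).
  move=> HQ; apply: C2 => -[z [Hz [Hf HQz]]]; apply: HQ.
  by rewrite -(uniqz x z Hz Hf).
split.
  have [v Hv] := @sum_exists R _ Sit gi h (Init do_) hg gh phi (fun s => p s S0) Hnz.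
  have [g' Hg'] := @sum_exists R _ Sit gi h (Init do_) hg gh (fun _ => True) (fun s => p s S0) Hnz.
  exists v, g', (fun x => if decb (phi (gi x)) then p (gi x) S0 else 0),
    (fun x => p (gi x) S0).
  split=> //; split=> //; split=> x; split.
  - move=> _ z [Hz [Hf Hph]] /=; have Ez := uniqz x z Hz Hf; rewrite -Ez.
    by have -> : decb (phi z) = true by apply/decbP.
  - move=> Hne /=; case E : (decb _) => //; exfalso; apply: Hne.
    exists (gi x); split; first exact: (proj1 (Hg x)).
    by split; [exact: (proj2 (Hg x))|apply/decbP].
  - by move=> _ z [Hz [Hf _]]; rewrite -(uniqz x z Hz Hf).
  - move=> Hne; exfalso; apply: Hne; exists (gi x); split; first exact: (proj1 (Hg x)).
    by split; [exact: (proj2 (Hg x))|].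
move=> v g' u u' Hv Hg' Hu Hu'.
rewrite (@sum_char R _ Sit gi h (Init do_) hg gh phi (fun s => p s S0) u Hnz _ _ v Hv); first last.
- by move=> x; apply: (proj2 (condP _ _ x (Hu x))).
- by move=> x; apply: (proj1 (condP _ _ x (Hu x))).
rewrite (@sum_char R _ Sit gi h (Init do_) hg gh (fun _ => True) (fun s => p s S0) u' Hnz _ _ g' Hg') //.
by move=> x; apply: (proj1 (condP _ _ x (Hu' x))).
Qed.
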